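(* Fix a scenario $v$. Conditioned on $v$, on the taken box $i^*$, and on the stopping time $\tau^*$, the expected objective of Balanced Stopping with Poisson Rounding is at most $\tau^*+c_{i^*}+v_{i^*}=\tau^*+\beta_{i^*}$.
   Context: Correlated Pandora's Problem: boxes $[n]$, box $i$ has opening cost $c_i>0$ and volume $v_i\ge 0$; scenario $v=(v_1,\dots,v_n)$. Write $x_+=\max\{x,0\}$. Let $X_i:[0,\infty)\to[0,1]$, $i\in[n]$, be non-decreasing with $\sum_{i}\big(X_i(t)-X_i((t-c_i)_+)\big)\le 1$ for all $t\ge 0$ (a feasible solution of the General-Cost Convex Program). Poisson Rounding: $\bar x_i(t)=\frac1t\int_0^t\big(X_i(t')-X_i((t'-c_i)_+)\big)\,dt'$; independently for each box $i$, arrivals form a non-homogeneous Poisson process in Poisson time $\tau\ge 0$ with rate $\frac1{c_i}\bar x_i(\tau/2)$; $\alpha_i$ is the first arrival time of box $i$. Balanced Stopping: $\beta_i=c_i+v_i$, $\tau_i=\max\{\alpha_i,\beta_i\}$, $\tau^*=\min_i\tau_i$ (the stopping time), $i^*=\arg\min_i\tau_i$ (the taken box). The algorithm opens in real time, in ascending order of $\alpha_j$, exactly the boxes with $\alpha_j\le\tau^*$ (each costing $c_j$), then stops and takes box $i^*$ (or an opened box of no larger volume); its objective is $\sum_{j:\alpha_j\le\tau^*}c_j$ plus the taken volume. *)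

(* Defs.v *)
From HB Require Import structures.
From mathcomp Require Import all_boot all_order all_algebra.
From mathcomp Require Import all_classical all_reals all_analysis.
From mathcomp Require Import measurable_realfun.
Set Implicit Arguments. Unset Strict Implicit. Unset Printing Implicit Defensive.
Import Order.TTheory GRing.Theory Num.Theory.
Local Open Scope classical_set_scope.
Local Open Scope ring_scope.

Section PandoraDefs.
Variable R : realType.

Definition feasible_GCP (n : nat) (c : 'I_n -> R) (X : 'I_n -> R -> R) : Prop :=
  (forall i t, 0 <= t -> 0 <= X i t <= 1) /\
  (forall i s t, 0 <= s -> s <= t -> X i s <= X i t) /\
  (forall t, 0 <= t -> \sum_(i < n) (X i t - X i (Num.max (t - c i) 0)) <= 1).

Definition xbar (X : R -> R) (c t : R) : R :=
  t^-1 * Rintegral (@lebesgue_measure R) `[0, t]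
                  (fun t' => X t' - X (Num.max (t' - c) 0)).

Definition poisson_rate (X : R -> R) (c tau : R) : R := c^-1 * xbar X c (tau / 2).

Definition cum_rate (X : R -> R) (c s : R) : R :=
  Rintegral (@lebesgue_measure R) `[0, s] (poisson_rate X c).

End PandoraDefs.

Section Stopping.
Context {R : realType} {n : nat} {d : measure_display} {T : measurableType d}.
Local Open Scope ereal_scope.

Definition tau_box (c v : 'I_n -> R) (alpha : 'I_n -> T -> \bar R) (i : 'I_n) (w : T)
  : \bar R := Order.max (alpha i w) ((c i + v i)%R)%:E.

Definition tau_star (c v : 'I_n -> R) (alpha : 'I_n -> T -> \bar R) (w : T) : \bar R :=
  \big[Order.min/+oo]_(i < n) tau_box c v alpha i w.

(* i^* = argmin_i tau_i (ties broken towards the smallest index) *)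
Definition taken (c v : 'I_n -> R) (alpha : 'I_n -> T -> \bar R) (i : 'I_n) (w : T)
  : Prop :=
  tau_box c v alpha i w = tau_star c v alpha w /\
  forall j : 'I_n, (j < i)%N -> tau_star c v alpha w < tau_box c v alpha j w.

Definition opening_cost (c v : 'I_n -> R) (alpha : 'I_n -> T -> \bar R) (w : T)
  : \bar R :=
  \sum_(j < n | alpha j w <= tau_star c v alpha w) (c j)%:E.

Definition mutually_independent (P : probability T R) (alpha : 'I_n -> T -> \bar R)
  : Prop :=
  forall B : 'I_n -> set (\bar R), (forall j, measurable (B j : set (\bar R))) ->
    P (\bigcap_(j in [set: 'I_n]) (alpha j @^-1` B j)) =
    \prod_(j < n) P (alpha j @^-1` B j).

End Stopping.

(* Main.v *)
Require Import Defs.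
From HB Require Import structures.
From mathcomp Require Import all_boot all_order all_algebra.
From mathcomp Require Import all_classical all_reals all_analysis.
From mathcomp Require Import measurable_realfun.
From mathcomp Require Import ring lra.
Import Order.TTheory GRing.Theory Num.Theory.
Local Open Scope classical_set_scope.
Local Open Scope ring_scope.

Set Implicit Arguments. Unset Strict Implicit. Unset Printing Implicit Defensive.


Section Analytic.
Variable R : realType.
Variable n : nat.
Variables (c : 'I_n -> R) (X : 'I_n -> R -> R).
Hypothesis c0 : forall i, 0 < c i.
Hypothesis feas : feasible_GCP c X.
Notation mu := (@lebesgue_measure R).

Definition gg j t := X j t - X j (Num.max (t - c j) 0).

Lemma gg_bounds j t : 0 <= t -> 0 <= gg j t <= 1.
Proof.
move=> t0; case: feas => b [m _].
have h0 : 0 <= Num.max (t - c j) 0 by rewrite le_max lexx orbT.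
have h1 : Num.max (t - c j) 0 <= t.
  by rewrite ge_max t0 andbT lerBlDr lerDl ltW.
have /andP[a1 a2] := b j t t0.
have /andP[b1 b2] := b j _ h0.
have mono := m j _ _ h0 h1.
rewrite /gg; apply/andP; split; first by rewrite subr_ge0.
lra.
Qed.

Lemma gg_meas j (D : set R) : measurable D -> D `<=` [set x | 0 <= x] ->
  measurable_fun D (gg j).
Proof.
move=> mD D0; case: feas => _ [m _].
pose X' t := X j (Num.max t 0).
have X'nd : {homo X' : x y / x <= y}.
  move=> x y xy; apply: m; first by rewrite le_max lexx orbT.
  exact: le_max2.
apply: (@eq_measurable_fun _ _ _ _ D (fun t => X' t - X' (t - c j))).
  move=> x /set_mem /D0 /= x0; rewrite /gg /X'.
  by rewrite (_ : Num.max x 0 = x)// max_l.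
apply: measurable_funB; first exact: nondecreasing_measurable.
apply: nondecreasing_measurable => // x y xy; apply: X'nd.
by rewrite lerD2r.
Qed.

Lemma itv0_ge0 (u : R) : `[0, u] `<=` [set x : R | 0 <= x].
Proof. by move=> x /=; rewrite in_itv/= => /andP[]. Qed.

Lemma mu_itv (a b : R) : a <= b -> mu `[a, b] = (b - a)%:E.
Proof.
move=> ab; rewrite lebesgue_measure_itv/= lte_fin.
case: ltP => //; rewrite le_eqVlt => /orP[/eqP ->|]; first by rewrite subrr.
by move=> ba; exfalso; move: ab; rewrite leNgt ba.
Qed.

Lemma gg_int j u : 0 <= u -> mu.-integrable `[0, u] (EFin \o gg j).
Proof.
move=> u0; apply: measurable_bounded_integrable => //.
- by have := mu_itv u0 => /= ->; rewrite ltry.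
- by apply: gg_meas => //; exact: itv0_ge0.
exists 1; split; first exact: num_real.
move=> M M1 x /itv0_ge0 /= x0.
have /andP[a b] := gg_bounds j x0.
by rewrite ger0_norm// (le_trans b)// ltW.
Qed.

Definition GG j u := Rintegral mu `[0, u] (gg j).

Lemma GG_bounds j u : 0 <= u -> 0 <= GG j u <= u.
Proof.
move=> u0; apply/andP; split.
  by apply: Rintegral_ge0 => x /itv0_ge0 x0; have /andP[] := gg_bounds j x0.
rewrite /GG; apply: (@le_trans _ _ (Rintegral mu `[0, u] (fun=> 1))).
  apply: le_Rintegral => //; first exact: gg_int.
    apply: measurable_bounded_integrable => //; first by have := mu_itv u0 => /= ->; rewrite ltry.
    exists 1; split; first exact: num_real.
    by move=> M M1 x _ /=; rewrite normr1 ltW.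
  by move=> x /itv0_ge0 x0; have /andP[] := gg_bounds j x0.
by rewrite Rintegral_cst//; have := mu_itv u0 => /= ->; rewrite /= subr0 mul1r.
Qed.

Lemma GG_mono j u u' : 0 <= u -> u <= u' -> GG j u <= GG j u'.
Proof.
move=> u0 uu'; rewrite -subr_ge0 /GG.
rewrite (@Rintegral_itvB _ _ (BLeft 0) (BRight u') u).
- apply: Rintegral_ge0 => x /=; rewrite in_itv/= => /andP[ux _].
  by have /andP[] := gg_bounds j (le_trans u0 (ltW ux)).
- exact/gg_int/(le_trans u0).
- by rewrite bnd_simp.
- by rewrite bnd_simp.
Qed.


Lemma Rint_sum (D : set R) (F : 'I_n -> R -> R) : measurable D ->
  (forall j, mu.-integrable D (EFin \o F j)) ->
  \sum_j Rintegral mu D (F j) = Rintegral mu D (fun x => \sum_j F j x).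
Proof.
move=> mD iF; rewrite /Rintegral sum_fine; last first.
  by move=> j _; apply: integrable_fin_num => //; exact: iF.
congr fine; rewrite -integral_sum//.
by apply: eq_integral => x _; rewrite sumEFin.
Qed.

Lemma sum_GG u : 0 <= u -> \sum_j GG j u <= u.
Proof.
move=> u0; rewrite /GG Rint_sum//; last by move=> j; exact: gg_int.
apply: (@le_trans _ _ (Rintegral mu `[0, u] (fun=> 1))).
  apply: le_Rintegral => //.
  - rewrite (_ : EFin \o _ = fun x => \sum_j (EFin \o gg j) x); last first.
      by apply/funext => x; rewrite /= sumEFin.
    by apply: integrable_sum => // j _; exact: gg_int.
  - apply: measurable_bounded_integrable => //.
      by have := mu_itv u0 => /= ->; rewrite ltry.
    exists 1; split; first exact: num_real.
    by move=> M M1 x _ /=; rewrite normr1 ltW.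
  move=> x /itv0_ge0 x0; case: feas => _ [_ /(_ x x0)].
  by rewrite /gg.
by rewrite Rintegral_cst//; have := mu_itv u0 => /= ->; rewrite /= subr0 mul1r.
Qed.

Lemma xbarE j u : xbar (X j) (c j) u = u^-1 * GG j u.
Proof. by []. Qed.

Lemma xbar_bounds j u : 0 <= u -> 0 <= xbar (X j) (c j) u <= 1.
Proof.
move=> u0; rewrite xbarE; have /andP[g0 gu] := GG_bounds j u0.
apply/andP; split; first by rewrite mulr_ge0// invr_ge0.
have [->|u0'] := eqVneq u 0; first by rewrite invr0 mul0r.
by rewrite ler_pdivrMl ?mulr1// lt_neqAle eq_sym u0' u0.
Qed.

Lemma sum_xbar u : 0 <= u -> \sum_j xbar (X j) (c j) u <= 1.
Proof.
move=> u0; under eq_bigr do rewrite xbarE.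
rewrite -mulr_sumr; have gu := sum_GG u0.
have [->|u0'] := eqVneq u 0; first by rewrite invr0 mul0r.
by rewrite ler_pdivrMl ?mulr1// lt_neqAle eq_sym u0' u0.
Qed.


Lemma mu_itv_oc (a b : R) : a <= b -> mu `]a, b] = (b - a)%:E.
Proof.
move=> ab; rewrite lebesgue_measure_itv/= lte_fin.
case: ltP => //; rewrite le_eqVlt => /orP[/eqP ->|]; first by rewrite subrr.
by move=> ba; exfalso; move: ab; rewrite leNgt ba.
Qed.

Definition xi j (tau : R) := xbar (X j) (c j) (tau / 2).

Lemma xi_bounds j tau : 0 <= tau -> 0 <= xi j tau <= 1.
Proof. by move=> t0; apply: xbar_bounds; rewrite divr_ge0. Qed.

Lemma xi_meas j (D : set R) : measurable D -> D `<=` [set x | 0 <= x] ->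
  measurable_fun D (xi j).
Proof.
move=> mD D0.
apply: (@eq_measurable_fun _ _ _ _ D
  (fun tau => (tau / 2) `^ (-1) * GG j (Num.max (tau / 2) 0))).
  move=> x /set_mem /D0 /= x0; rewrite /xi xbarE.
  have x20 : 0 <= x / 2 by rewrite divr_ge0.
  by rewrite powR_inv1// (_ : Num.max (x / 2) 0 = x / 2)// max_l.
apply: measurable_funM.
  apply: (@measurableT_comp _ _ _ _ _ _ (@powR R ^~ (-1)) D (fun x => x / 2)).
    exact: measurable_powR.
  exact: mulrr_measurable.
apply: nondecreasing_measurable => // x y xy.
apply: GG_mono; first by rewrite le_max lexx orbT.
by apply: le_max2 => //; rewrite ler_pM2r.
Qed.

Lemma xi_int j t : 0 <= t -> mu.-integrable `[0, t] (EFin \o xi j).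
Proof.
move=> t0; apply: measurable_bounded_integrable => //.
- by have := mu_itv t0 => /= ->; rewrite ltry.
- by apply: xi_meas => //; exact: itv0_ge0.
exists 1; split; first exact: num_real.
move=> M M1 x /itv0_ge0 /= x0.
have /andP[a b] := xi_bounds j x0.
by rewrite ger0_norm// (le_trans b)// ltW.
Qed.

Lemma rateE j : poisson_rate (X j) (c j) = fun tau => (c j)^-1 * xi j tau.
Proof. by []. Qed.

Lemma rate_int j t : 0 <= t -> mu.-integrable `[0, t] (EFin \o poisson_rate (X j) (c j)).
Proof.
move=> t0; rewrite rateE.
rewrite (_ : EFin \o _ = fun x => (((c j)^-1)%:E * (EFin \o xi j) x)%E); last first.
  by apply/funext => x.
by apply: integrableZl => //; exact: xi_int.
Qed.

Definition Lam j s := cum_rate (X j) (c j) s.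

Lemma Lam_ge0 j s : 0 <= s -> 0 <= Lam j s.
Proof.
move=> s0; apply: Rintegral_ge0 => x /itv0_ge0 x0.
apply: mulr_ge0; first by rewrite invr_ge0 ltW.
by have /andP[h _] := xi_bounds j x0; exact: h.
Qed.

Lemma Lam_lip j s t : 0 <= s -> s <= t ->
  0 <= Lam j t - Lam j s <= (t - s) / c j.
Proof.
move=> s0 st; have t0 := le_trans s0 st.
rewrite /Lam /cum_rate (@Rintegral_itvB _ _ (BLeft 0) (BRight t) s); last 3 first.
- exact: rate_int.
- by rewrite bnd_simp.
- by rewrite bnd_simp.
have sub : `]s, t] `<=` [set x : R | 0 <= x].
  by move=> x /=; rewrite in_itv/= => /andP[sx _]; rewrite (le_trans s0)// ltW.
apply/andP; split.
  apply: Rintegral_ge0 => x /sub /= x0.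
  apply: mulr_ge0; first by rewrite invr_ge0 ltW.
by have /andP[h _] := xi_bounds j x0; exact: h.
apply: (@le_trans _ _ (Rintegral mu `]s, t] (fun=> (c j)^-1))).
  apply: le_Rintegral => //.
  - apply: integrableS (rate_int j t0) => //.
    by move=> x /=; rewrite !in_itv/= => /andP[sx ->]; rewrite (le_trans s0)// ltW.
  - apply: measurable_bounded_integrable => //.
      by have := mu_itv_oc st => /= ->; rewrite ltry.
    exists `|(c j)^-1|; split; first exact: num_real.
    by move=> M M1 x _ /=; rewrite ltW.
  move=> x /sub /= x0; rewrite ger_pMr ?invr_gt0//.
  by have /andP[_ h] := xi_bounds j x0; exact: h.
rewrite Rintegral_cst//; have := mu_itv_oc st => /= ->.
by rewrite /= mulrC.
Qed.

Lemma sum_cLam t : 0 <= t -> \sum_j c j * Lam j t <= t.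
Proof.
move=> t0.
have -> : \sum_j c j * Lam j t = \sum_j Rintegral mu `[0, t] (xi j).
  apply: eq_bigr => j _; rewrite /Lam /cum_rate -RintegralZl//; last exact: rate_int.
  by apply: eq_Rintegral => x _; rewrite /poisson_rate mulrA mulfV ?mul1r// gt_eqF.
rewrite Rint_sum//; last by move=> j; exact: xi_int.
apply: (@le_trans _ _ (Rintegral mu `[0, t] (fun=> 1))).
  apply: le_Rintegral => //.
  - rewrite (_ : EFin \o _ = fun x => \sum_j (EFin \o xi j) x); last first.
      by apply/funext => x; rewrite /= sumEFin.
    by apply: integrable_sum => // j _; exact: xi_int.
  - apply: measurable_bounded_integrable => //.
      by have := mu_itv t0 => /= ->; rewrite ltry.
    exists 1; split; first exact: num_real.
    by move=> M M1 x _ /=; rewrite normr1 ltW.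
  move=> x /itv0_ge0 x0; apply: sum_xbar; by rewrite divr_ge0.
by rewrite Rintegral_cst//; have := mu_itv t0 => /= ->; rewrite /= subr0 mul1r.
Qed.

End Analytic.


Section Sets.
Variables (R : realType) (n : nat) (c v : 'I_n -> R).
Variables (i : 'I_n) (B : set (\bar R)).
Hypothesis mB : measurable B.

Definition bet k := c k + v k.
Definition Csum := \sum_k c k.

Section Generic.
Context {d0 : measure_display} {T0 : measurableType d0}.
Variable a : 'I_n -> T0 -> \bar R.

Definition Cmp (l : 'I_n) : set T0 :=
  (if (l < i)%N then [set w | (tau_box c v a i w < tau_box c v a l w)%E] else setT)
  `&` [set w | (tau_box c v a i w <= tau_box c v a l w)%E].

Definition Iset (lo hi : R) : set (\bar R) :=
  [set x | (lo%:E < x)%E] `&` ([set x | (x <= hi%:E)%E] `&`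
   ([set x | (x < Csum%:E)%E] `&` B)).

Definition Vset (j : 'I_n) (lo hi : R) : set T0 :=
  (tau_box c v a i) @^-1` Iset lo hi `&` \bigcap_(l in [set l | l != j]) Cmp l.

Definition good (j : 'I_n) : set T0 :=
  (if (j < i)%N then [set w | (tau_box c v a i w < (bet j)%:E)%E] else setT)
  `&` [set w | (tau_box c v a i w <= (bet j)%:E)%E].

Lemma meas_tau k : measurable_fun setT (a k) -> measurable_fun setT (tau_box c v a k).
Proof. by move=> ma; apply: measurable_maxe => //; exact: measurable_cst. Qed.

Lemma mlt (f g : T0 -> \bar R) : measurable_fun setT f -> measurable_fun setT g ->
  measurable [set w | (f w < g w)%E].
Proof. by move=> mf mg; rewrite -[X in measurable X]setTI; exact: measurable_lte. Qed.

Lemma mle (f g : T0 -> \bar R) : measurable_fun setT f -> measurable_fun setT g ->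
  measurable [set w | (f w <= g w)%E].
Proof. by move=> mf mg; rewrite -[X in measurable X]setTI; exact: measurable_lee. Qed.

Lemma meas_Cmp l : measurable_fun setT (a i) -> measurable_fun setT (a l) ->
  measurable (Cmp l).
Proof.
move=> mi ml; apply: measurableI; last by apply: mle; exact: meas_tau.
by case: ifP => _ //; apply: mlt; exact: meas_tau.
Qed.

Lemma meas_good j : measurable_fun setT (a i) -> measurable (good j).
Proof.
move=> mi; apply: measurableI.
  by case: ifP => _ //; apply: mlt; [exact: meas_tau|exact: measurable_cst].
by apply: mle; [exact: meas_tau|exact: measurable_cst].
Qed.

End Generic.

Lemma meas_Iset lo hi : measurable (Iset lo hi).
Proof.
have mid : measurable_fun setT (@id (\bar R)) by [].
apply: measurableI; first by apply: mlt => //; exact: measurable_cst.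
apply: measurableI; first by apply: mle => //; exact: measurable_cst.
by apply: measurableI => //; apply: mlt => //; exact: measurable_cst.
Qed.

Lemma meas_Vset {d0} {T0 : measurableType d0} (a : 'I_n -> T0 -> \bar R) j lo hi :
  i != j -> (forall l, l != j -> measurable_fun setT (a l)) ->
  measurable (Vset a j lo hi).
Proof.
move=> ij ma; apply: measurableI.
  rewrite -[X in measurable X]setTI; apply: meas_tau => //; first exact: ma.
  exact: meas_Iset.
apply: fin_bigcap_measurable; first exact: finite_finset.
by move=> l /= lj; apply: meas_Cmp; apply: ma.
Qed.

End Sets.


Section Indep.
Variables (R : realType) (n : nat) (d : measure_display) (T : measurableType d).
Variables (P : probability T R) (alpha : 'I_n -> T -> \bar R).
Hypothesis malpha : forall i, measurable_fun setT (alpha i).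
Hypothesis indep : mutually_independent P alpha.

Definition pr (E : set T) : R := fine (P E).

Lemma prE E : measurable E -> P E = (pr E)%:E.
Proof.
move=> mE; rewrite /pr fineK// ge0_fin_numE ?measure_ge0//.
by rewrite (le_lt_trans (probability_le1 _ mE))// ltey.
Qed.

Lemma pr_ge0 E : 0 <= pr E.
Proof. by rewrite /pr fine_ge0// measure_ge0. Qed.

Lemma pr_le1 E : measurable E -> pr E <= 1.
Proof. by move=> mE; rewrite -lee_fin -prE// probability_le1. Qed.

Lemma pr_mono E F : measurable E -> measurable F -> E `<=` F -> pr E <= pr F.
Proof. by move=> mE mF EF; rewrite -lee_fin -!prE//; apply: le_measure => //; rewrite inE. Qed.

Lemma prU E F : measurable E -> measurable F -> E `&` F = set0 ->
  pr (E `|` F) = pr E + pr F.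
Proof.
move=> mE mF EF; apply: EFin_inj; rewrite EFinD -!prE//; last exact: measurableU.
by rewrite measureU.
Qed.

Lemma pr_sub E F : measurable E -> measurable F -> pr (E `|` F) <= pr E + pr F.
Proof.
move=> mE mF; rewrite -lee_fin EFinD -!prE//; last exact: measurableU.
exact: measureU2.
Qed.

Lemma prC E : measurable E -> pr (~` E) = 1 - pr E.
Proof.
move=> mE; apply: EFin_inj; rewrite -prE; last exact: measurableC.
by rewrite probability_setC// prE.
Qed.

Lemma prT : pr setT = 1.
Proof. by rewrite /pr probability_setT. Qed.


Definition Gsys (j : 'I_n) : set (set T) :=
  [set E | exists Bs : 'I_n -> set (\bar R), (forall l, measurable (Bs l)) /\
     Bs j = setT /\ E = \bigcap_(l in [set: 'I_n]) (alpha l @^-1` Bs l)].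

Lemma Gsys_setI j : setI_closed (Gsys j).
Proof.
move=> E F [Bs [mBs [Bsj ->]]] [Cs [mCs [Csj ->]]].
exists (fun l => Bs l `&` Cs l); split; first by move=> l; exact: measurableI.
split; first by rewrite Bsj Csj setIT.
apply/seteqP; split => w /=.
  by move=> [h1 h2] l _; split; [exact: h1|exact: h2].
by move=> h; split => l _; have [] := h l I.
Qed.

Lemma meas_pre l (Y : set (\bar R)) : measurable Y -> measurable (alpha l @^-1` Y).
Proof. by move=> mY; rewrite -[X in measurable X]setTI; exact: malpha. Qed.

Lemma Gsys_meas j E : Gsys j E -> measurable E.
Proof.
move=> [Bs [mBs [_ ->]]]; apply: fin_bigcap_measurable; first exact: finite_finset.
by move=> l _; exact: meas_pre.
Qed.

Lemma Gsys_indep j (Y : set (\bar R)) E : measurable Y -> Gsys j E ->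
  P (E `&` alpha j @^-1` Y) = (P E * P (alpha j @^-1` Y))%E.
Proof.
move=> mY [Bs [mBs [Bsj ->]]].
pose Cs l := if l == j then Y else Bs l.
have mCs l : measurable (Cs l) by rewrite /Cs; case: ifP.
have -> : \bigcap_(l in [set: 'I_n]) alpha l @^-1` Bs l `&` alpha j @^-1` Y =
    \bigcap_(l in [set: 'I_n]) alpha l @^-1` Cs l.
  apply/seteqP; split => w /=.
    move=> [h1 h2] l _; rewrite /Cs; case: eqP => [->//|_]; exact: h1.
  move=> h; split; last by have := h j I; rewrite /Cs eqxx.
  move=> l _; have := h l I; rewrite /Cs; case: eqP => [->|//].
  by rewrite Bsj.
rewrite !indep//.
rewrite (bigD1 j)//= (bigD1 j (P := xpredT))//= Bsj /Cs eqxx.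
rewrite preimage_setT probability_setT mul1e muleC; congr (_ * _)%E.
by apply: eq_bigr => l /negPf ->.
Qed.

Definition indep_set j (Y : set (\bar R)) : set (set T) :=
  [set E | measurable E /\ P (E `&` alpha j @^-1` Y) = (P E * P (alpha j @^-1` Y))%E].

Lemma indep_sigma j (Y : set (\bar R)) : measurable Y ->
  forall E, <<s Gsys j >> E ->
  P (E `&` alpha j @^-1` Y) = (P E * P (alpha j @^-1` Y))%E.
Proof.
move=> mY E sE.
have mYj : measurable (alpha j @^-1` Y) by exact: meas_pre.
suff : <<s Gsys j >> `<=` indep_set j Y by move=> /(_ _ sE) [].
apply: lambda_system_subset; last by [].
- exact: Gsys_setI.
- apply/dynkin_lambda_system; split.
  + by split => //; rewrite setTI probability_setT mul1e.
  + move=> F [mF hF]; split; first exact: measurableC.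
    have mFY : measurable (F `&` alpha j @^-1` Y) by exact: measurableI.
    have mFcY : measurable (~` F `&` alpha j @^-1` Y).
      by apply: measurableI => //; exact: measurableC.
    rewrite !(prE mFcY) (prE (measurableC mF)) (prE mYj) -EFinM; congr EFin.
    rewrite prC//.
    have : pr (alpha j @^-1` Y) = pr (F `&` alpha j @^-1` Y) + pr (~` F `&` alpha j @^-1` Y).
      rewrite -prU//; last by rewrite setIACA setICr set0I.
      by rewrite -setIUl setUv setTI.
    move: hF; rewrite (prE mFY) (prE mF) (prE mYj) -EFinM => -[e1] e2.
    by rewrite mulrBl mul1r -e1; lra.
  + move=> F tF hF; split.
      by apply: bigcup_measurable => k _; have [] := hF k.
    rewrite setI_bigcupl measure_bigcup//; last 2 first.
    - by move=> k _; apply: measurableI => //; have [] := hF k.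
    - by apply: trivIset_setIr.
    rewrite measure_bigcup//; last by move=> k _; have [] := hF k.
    rewrite (prE mYj) muleC -nneseriesZl; last by move=> k _; exact: measure_ge0.
    apply: eq_eseriesr => k _; have [_ e] := hF k.
    transitivity (P (F k) * P (alpha j @^-1` Y))%E; first exact: e.
    by rewrite (prE mYj) muleC.
- move=> E' GE'; split; first exact: Gsys_meas GE'.
  exact: Gsys_indep.
Qed.

End Indep.

Section Sigma.
Variables (R : realType) (n : nat) (d : measure_display) (T : measurableType d).
Variables (P : probability T R) (alpha : 'I_n -> T -> \bar R).
Hypothesis malpha : forall i, measurable_fun setT (alpha i).
Variables (c v : 'I_n -> R) (i : 'I_n) (B : set (\bar R)).
Hypothesis mB : measurable B.

Lemma alpha_meas' j l : l != j ->
  measurable_fun (setT : set (g_sigma_algebraType (Gsys alpha j))) (alpha l).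
Proof.
move=> lj _ Y mY; rewrite setTI; apply: sub_sigma_algebra.
exists (fun m => if m == l then Y else setT); split.
  by move=> m; case: ifP.
split; first by rewrite eq_sym (negPf lj).
apply/seteqP; split => w /=.
  by move=> Yw m _; case: eqP => [->//|].
by move=> h; have := h l I; rewrite eqxx.
Qed.

Lemma Vset_sigma j lo hi : i != j ->
  <<s Gsys alpha j >> (Vset c v i B alpha j lo hi).
Proof.
move=> ij.
have := @meas_Vset R n c v i B mB _ (g_sigma_algebraType (Gsys alpha j)) alpha j lo hi ij.
by apply => l lj; exact: alpha_meas'.
Qed.

Lemma Vgood_sigma j lo hi : i != j ->
  <<s Gsys alpha j >> (Vset c v i B alpha j lo hi `&` good c v i alpha j).
Proof.
move=> ij.
have h1 := Vset_sigma lo hi ij.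
have h2 := @meas_good R n c v i _ (g_sigma_algebraType (Gsys alpha j)) alpha j
  (alpha_meas' ij).
exact: (@measurableI _ (g_sigma_algebraType (Gsys alpha j))).
Qed.

End Sigma.


Section Pointwise.
Variables (R : realType) (n : nat) (c v : 'I_n -> R).
Variables (d : measure_display) (T : measurableType d) (alpha : 'I_n -> T -> \bar R).
Hypothesis c0 : forall i, 0 < c i.
Hypothesis v0 : forall i, 0 <= v i.
Variables (i : 'I_n) (B : set (\bar R)).

Local Notation taus k := (tau_box c v alpha k).
Local Notation ts := (tau_star c v alpha).

Lemma bet_gt0 k : 0 < bet c v k.
Proof. by rewrite /bet ltr_wpDr. Qed.

Lemma taus_ge k w : ((bet c v k)%:E <= taus k w)%E.
Proof. by rewrite /tau_box le_max lexx orbT. Qed.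

Lemma ts_le k w : (ts w <= taus k w)%E.
Proof. exact: bigmin_le. Qed.

Lemma CmpP l w : Cmp c v i alpha l w <->
  (((l < i)%N -> (taus i w < taus l w)%E) /\ (taus i w <= taus l w)%E).
Proof.
rewrite /Cmp; case: ifP => li /=; split.
- by move=> [h1 h2]; split.
- by move=> [h1 h2]; split => //; exact: h1.
- by move=> [_ h2]; split.
- by move=> [_ h2]; split.
Qed.

Lemma takenP w : taken c v alpha i w <-> (forall l, Cmp c v i alpha l w).
Proof.
split.
  move=> [e h] l; apply/CmpP; rewrite e; split; first exact: h.
  exact: ts_le.
move=> h.
have e : taus i w = ts w.
  apply/eqP; rewrite eq_le ts_le andbT; apply/bigmin_geP; split; first exact: leey.
  by move=> l _; have /CmpP[] := h l.
split => // l li; rewrite -e; have /CmpP[h1 _] := h l; exact: h1.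
Qed.

Lemma ts_taken w : taken c v alpha i w -> ts w = taus i w.
Proof. by case. Qed.

Definition Aset := [set w | taken c v alpha i w /\ B (ts w)].

Lemma AsetE : Aset = \bigcap_(l in setT) Cmp c v i alpha l `&` taus i @^-1` B.
Proof.
apply/seteqP; split => w /=.
  move=> [tk Bw]; split; first by move=> l _; move/takenP: tk; apply.
  by rewrite -ts_taken.
move=> [h Bw]; have tk : taken c v alpha i w by apply/takenP => l; exact: h.
by split => //; rewrite ts_taken.
Qed.

Lemma U_Vset j lo hi : Aset `&` taus i @^-1` Iset c B lo hi =
  Vset c v i B alpha j lo hi `&` Cmp c v i alpha j.
Proof.
rewrite AsetE; apply/seteqP; split => w /=.
  move=> [[h Bw] I]; split; last exact: h.
  by split => // l _; exact: h.
move=> [[I h] hj]; split => //; split; last by case: I => _ [_ []].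
move=> l _; have [->//|lj] := eqVneq l j; exact: h.
Qed.


Lemma Csum_gt0 : 0 < Csum c.
Proof.
rewrite /Csum (bigD1 i)//= ltr_wpDr ?c0//.
by apply: sumr_ge0 => k _; exact: ltW.
Qed.

Lemma lt_tau k w (x : \bar R) : ((bet c v k)%:E <= x)%E -> (x < taus k w)%E ->
  (x < alpha k w)%E.
Proof.
move=> bx; rewrite /tau_box lt_max => /orP[//|].
by move=> xb; move: (le_lt_trans bx xb); rewrite ltxx.
Qed.

Lemma le_tau k w (x : \bar R) : ((bet c v k)%:E < x)%E -> (x <= taus k w)%E ->
  (x <= alpha k w)%E.
Proof.
move=> bx; rewrite /tau_box le_max => /orP[//|].
by move=> xb; move: (lt_le_trans bx xb); rewrite ltxx.
Qed.

Lemma Vgood_sub j lo hi :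
  Vset c v i B alpha j lo hi `&` good c v i alpha j `<=` Aset `&` taus i @^-1` Iset c B lo hi.
Proof.
rewrite (U_Vset j) => w [Vw gw]; split => //; apply/CmpP.
move: gw; rewrite /good; case: ifP => ji /= [g1 g2]; split => //.
- by move=> _; exact: (lt_le_trans g1 (taus_ge _ _)).
- exact: (le_trans g2 (taus_ge _ _)).
- exact: (le_trans g2 (taus_ge _ _)).
Qed.

Lemma covering j lo hi : i != j ->
  Aset `&` taus i @^-1` Iset c B lo hi `&` [set w | (alpha j w <= ts w)%E] `<=`
  (Vset c v i B alpha j lo hi `&` good c v i alpha j `&`
     alpha j @^-1` [set x | (x <= hi%:E)%E]) `|`
  (Vset c v i B alpha j lo hi `&`
     alpha j @^-1` ([set x | (lo%:E < x)%E] `&` [set x | (x <= hi%:E)%E])).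
Proof.
move=> ij w [Uw aj].
have [[tk Bw] I] := Uw.
have e := ts_taken tk.
have {}aj : (alpha j w <= taus i w)%E by rewrite -e; exact: aj.
have [lo_t [t_hi _]] := I.
move: Uw; rewrite (U_Vset j) => -[Vw /CmpP[c1 c2]].
have [g|ng] := pselect (good c v i alpha j w).
  left; split; first by split.
  exact: (le_trans aj t_hi).
right; split => //; split; last exact: (le_trans aj t_hi).
have [bt|tb] := ltP (bet c v j)%:E (taus i w).
  exact: (lt_le_trans lo_t (le_tau bt c2)).
exfalso; apply: ng; rewrite /good; split => //.
case: ifP => //= ji.
rewrite ltNge; apply/negP => bt.
have := lt_tau bt (c1 ji); rewrite ltNge aj //.
Qed.


Definition hN N := Csum c / N.+1%:R.
Definition tk N (k : nat) := k%:R * hN N.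
Definition Alo := Aset `&` [set w | (ts w < (Csum c)%:E)%E].
Definition Ahi := Aset `&` [set w | ((Csum c)%:E <= ts w)%E].
Definition U N k := Aset `&` taus i @^-1` Iset c B (tk N k) (tk N k.+1).

Lemma hN_gt0 N : 0 < hN N.
Proof. by rewrite /hN divr_gt0 ?Csum_gt0// ltr0n. Qed.

Lemma tk_le N k k' : (k <= k')%N -> tk N k <= tk N k'.
Proof. by move=> kk; rewrite /tk; apply: ler_wpM2r; [exact/ltW/hN_gt0|rewrite ler_nat]. Qed.

Lemma tk_ge0 N k : 0 <= tk N k.
Proof. by rewrite /tk; apply: mulr_ge0; [exact: ler0n|exact/ltW/hN_gt0]. Qed.

Lemma tkN N : tk N N.+1 = Csum c.
Proof. by rewrite /tk /hN mulrC divfK// pnatr_eq0. Qed.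

Lemma itv_disj N k k' (y : \bar R) : ((tk N k)%:E < y)%E -> (y <= (tk N k.+1)%:E)%E ->
  ((tk N k')%:E < y)%E -> (y <= (tk N k'.+1)%:E)%E -> k = k'.
Proof.
move=> a1 a2 b1 b2; case: (ltngtP k k') => // kk.
- have := le_lt_trans (le_trans a2 _) b1; rewrite lee_fin tk_le// => /(_ isT).
  by rewrite ltxx.
- have := le_lt_trans (le_trans b2 _) a1; rewrite lee_fin tk_le// => /(_ isT).
  by rewrite ltxx.
Qed.

Lemma exists_k (h x : R) m : 0 < x -> x <= m%:R * h ->
  exists k, (k < m)%N /\ k%:R * h < x <= k.+1%:R * h.
Proof.
move=> x0; elim: m => [|m IH]; first by rewrite mul0r => x0'; lra.
move=> xm; have [xm'|xm'] := leP x (m%:R * h).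
  by have [k [km hk]] := IH xm'; exists k; split => //; exact: ltnW.
by exists m; split => //; rewrite xm' xm.
Qed.

Lemma U_triv N : trivIset setT (U N).
Proof.
move=> k k' _ _ [w [[_ [a1 [a2 _]]] [_ [b1 [b2 _]]]]].
exact: (itv_disj a1 a2 b1 b2).
Qed.

Lemma V_triv N j : trivIset setT (fun k => Vset c v i B alpha j (tk N k) (tk N k.+1)).
Proof.
move=> k k' _ _ [w [[[a1 [a2 _]] _] [[b1 [b2 _]] _]]].
exact: (itv_disj a1 a2 b1 b2).
Qed.

Lemma Alo_part N : Alo = \big[setU/set0]_(k < N.+1) U N k.
Proof.
rewrite -bigcup_mkord; apply/seteqP; split => w.
  move=> [Aw tsC]; have [tk' Bw] := Aw.
  have e := ts_taken tk'.
  have [x ex] : exists x, taus i w = x%:E.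
    move: tsC (taus_ge i w); rewrite /= e.
    by case: (taus i w) => [x _ _| //|]; [exists x|rewrite leeNy_eq].
  have x0 : 0 < x by rewrite -lte_fin -ex (lt_le_trans _ (taus_ge i w))// lte_fin bet_gt0.
  have xC : x <= N.+1%:R * hN N by rewrite -/(tk N N.+1) tkN -lee_fin -ex -e ltW.
  have [k [kN hk]] := exists_k x0 xC.
  exists k => //; split => //; case/andP: hk => h1 h2.
  split; first by rewrite /= ex lte_fin.
  split; first by rewrite /= ex lee_fin.
  split => //=; first by rewrite -e.
  by rewrite -e.
move=> [k /= kN [Aw [_ [_ [tC _]]]]]; split => //=.
by rewrite ts_taken//; case: Aw.
Qed.

End Pointwise.


Lemma expdiff (R : realType) (a b : R) : 0 <= a -> a <= b ->
  expR (- a) - expR (- b) <= b - a.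
Proof.
move=> a0 ab.
have e : expR (- b) = expR (- a) * expR (- (b - a)) by rewrite -expRD; congr expR; ring.
have h1 := expR_ge1Dx (- (b - a)).
have h2 : expR (- a) <= 1 by rewrite expR_le1 oppr_le0.
have h3 : 0 <= expR (- a) by exact: expR_ge0.
rewrite e; nra.
Qed.

Lemma one_m_exp (R : realType) (x : R) : 1 - expR (- x) <= x.
Proof. have := expR_ge1Dx (- x); lra. Qed.

Section Core.
Variables (R : realType) (n : nat) (c v : 'I_n -> R) (X : 'I_n -> R -> R).
Variables (d : measure_display) (T : measurableType d) (P : probability T R).
Variables (alpha : 'I_n -> T -> \bar R).
Hypothesis c0 : forall i, 0 < c i.
Hypothesis v0 : forall i, 0 <= v i.
Hypothesis feas : feasible_GCP c X.
Hypothesis malpha : forall i, measurable_fun setT (alpha i).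
Hypothesis indep : mutually_independent P alpha.
Hypothesis hsurv : forall i (s : R), 0 <= s ->
     P [set w | (s%:E < alpha i w)%E] = (expR (- cum_rate (X i) (c i) s))%:E.
Variables (i : 'I_n) (B : set (\bar R)).
Hypothesis mB : measurable B.

Local Notation taus k := (tau_box c v alpha k).
Local Notation ts := (tau_star c v alpha).
Local Notation pr := (pr P).

Lemma meas_ts : measurable_fun setT ts.
Proof.
have h : forall s : seq 'I_n,
    measurable_fun setT (fun w => \big[Order.min/+oo%E]_(k <- s) taus k w).
  elim => [|a s IH]; first by under eq_fun do rewrite big_nil; exact: measurable_cst.
  under eq_fun do rewrite big_cons.
  by apply: measurable_mine => //; exact: meas_tau.
exact: h.
Qed.


Definition F j (t : R) := pr [set w | (alpha j w <= t%:E)%E].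

Lemma meas_le j (t : R) : measurable [set w | (alpha j w <= t%:E)%E].
Proof. by apply: mle => //; exact: measurable_cst. Qed.

Lemma meas_lt j (t : R) : measurable [set w | (t%:E < alpha j w)%E].
Proof. by apply: mlt => //; exact: measurable_cst. Qed.

Lemma F_eq j t : 0 <= t -> F j t = 1 - expR (- Lam c X j t).
Proof.
move=> t0; rewrite /F.
have -> : [set w | (alpha j w <= t%:E)%E] = ~` [set w | (t%:E < alpha j w)%E].
  apply/seteqP; split => w /=; first by move=> h; rewrite ltNge h.
  by move/negP; rewrite -leNgt.
rewrite prC; last exact: meas_lt.
congr (_ - _); rewrite /pr (hsurv j t0)//.
Qed.

Lemma Fdiff j (t0 t1 : R) : t0 <= t1 ->
  pr (alpha j @^-1` ([set x | (t0%:E < x)%E] `&` [set x | (x <= t1%:E)%E])) =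
  F j t1 - F j t0.
Proof.
move=> t01; rewrite /F.
have -> : [set w | (alpha j w <= t1%:E)%E] =
    [set w | (alpha j w <= t0%:E)%E] `|`
    alpha j @^-1` ([set x | (t0%:E < x)%E] `&` [set x | (x <= t1%:E)%E]).
  apply/seteqP; split => w /=.
    by move=> h; case: (leP (alpha j w) t0%:E) => h'; [left|right].
  by move=> [h|[_ ->]]//; exact: (le_trans h).
rewrite prU.
- by ring.
- exact: meas_le.
- apply: meas_pre => //; apply: measurableI.
    by apply: mlt => //; exact: measurable_cst.
  by apply: mle => //; exact: measurable_cst.
- by apply/seteqP; split => w //= [h [h' _]]; move: (le_lt_trans h h'); rewrite ltxx.
Qed.

Lemma F_bounds j (t0 t1 : R) : 0 <= t0 -> t0 <= t1 ->
  0 <= F j t1 <= Lam c X j t0 + (t1 - t0) / c j /\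
  F j t1 - F j t0 <= (t1 - t0) / c j.
Proof.
move=> t00 t01; have t10 := le_trans t00 t01.
have /andP[l1 l2] := Lam_lip c0 feas j t00 t01.
have L0 := Lam_ge0 c0 feas j t00.
rewrite !F_eq//; split.
  apply/andP; split; first by rewrite /F -F_eq//; exact: pr_ge0.
  by have := one_m_exp (Lam c X j t1); lra.
have := expdiff L0 (_ : Lam c X j t0 <= Lam c X j t1); lra.
Qed.


Definition Sj j := [set w | (alpha j w <= ts w)%E].

Lemma meas_Sj j : measurable (Sj j).
Proof. by apply: mle => //; exact: meas_ts. Qed.

Lemma meas_Aset : measurable (Aset c v alpha i B).
Proof.
rewrite AsetE; apply: measurableI.
  apply: fin_bigcap_measurable; first exact: finite_finset.
  by move=> l _; exact: meas_Cmp.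
by rewrite -[X in measurable X]setTI; apply: meas_tau.
Qed.

Lemma meas_U lo hi : measurable (Aset c v alpha i B `&` taus i @^-1` Iset c B lo hi).
Proof.
apply: measurableI; first exact: meas_Aset.
by rewrite -[X in measurable X]setTI; apply: meas_tau => //; exact: meas_Iset.
Qed.

Lemma prM E Y : measurable E -> measurable Y ->
  P (E `&` Y) = (P E * P Y)%E -> pr (E `&` Y) = pr E * pr Y.
Proof.
by move=> mE mY; rewrite (prE P (measurableI _ _ mE mY)) (prE P mE) (prE P mY) => -[].
Qed.

Lemma core j (t0 t1 : R) : i != j -> 0 <= t0 -> t0 <= t1 ->
  pr (Aset c v alpha i B `&` taus i @^-1` Iset c B t0 t1 `&` Sj j) <=
  pr (Aset c v alpha i B `&` taus i @^-1` Iset c B t0 t1) * (Lam c X j t0 + (t1 - t0) / c j)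
  + pr (Vset c v i B alpha j t0 t1) * ((t1 - t0) / c j).
Proof.
move=> ij t00 t01.
set U := Aset c v alpha i B `&` _.
set V := Vset c v i B alpha j t0 t1.
set G := good c v i alpha j.
set Y1 := [set x : \bar R | (x <= t1%:E)%E].
set Y2 := [set x : \bar R | (t0%:E < x)%E] `&` Y1.
have mY1 : measurable Y1 by apply: mle => //; exact: measurable_cst.
have mY2 : measurable Y2.
  by apply: measurableI => //; apply: mlt => //; exact: measurable_cst.
have mV : measurable V by apply: meas_Vset.
have mG : measurable G by apply: meas_good.
have mU : measurable U by exact: meas_U.
have mVG : measurable (V `&` G) by exact: measurableI.
have mA1 : measurable (alpha j @^-1` Y1) by exact: meas_pre.
have mA2 : measurable (alpha j @^-1` Y2) by exact: meas_pre.
have h1 : pr (U `&` Sj j) <= pr (V `&` G `&` alpha j @^-1` Y1) + pr (V `&` alpha j @^-1` Y2).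
  apply: le_trans; last apply: pr_sub; [|exact: measurableI|exact: measurableI].
  apply: pr_mono; [exact: measurableI (meas_Sj j)| |exact: covering].
  by apply: measurableU; exact: measurableI.
have e1 : pr (V `&` G `&` alpha j @^-1` Y1) = pr (V `&` G) * F j t1.
  apply: prM => //; apply: indep_sigma => //.
  exact: Vgood_sigma.
have e2 : pr (V `&` alpha j @^-1` Y2) = pr V * (F j t1 - F j t0).
  rewrite -Fdiff//; apply: prM => //; apply: indep_sigma => //.
  exact: Vset_sigma.
have h3 : pr (V `&` G) <= pr U by apply: pr_mono => //; exact: Vgood_sub.
have [/andP[f0 f1] f2] := F_bounds j t00 t01.
have p0 := pr_ge0 P (V `&` G).
have p1 := pr_ge0 P V.
have L0 := Lam_ge0 c0 feas j t00.
have q0 : 0 <= (t1 - t0) / c j by rewrite divr_ge0 ?subr_ge0// ltW.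
nra.
Qed.


Lemma pr_bigsetU (Fs : nat -> set T) m : (forall k, measurable (Fs k)) ->
  trivIset setT Fs -> pr (\big[setU/set0]_(k < m) Fs k) = \sum_(k < m) pr (Fs k).
Proof.
move=> mF tF; apply: EFin_inj; rewrite -prE; last exact: bigsetU_measurable.
rewrite measure_bigsetU// -sumEFin; apply: eq_bigr => k _; exact: prE.
Qed.

Lemma tk_diff N k : tk c N k.+1 - tk c N k = hN c N.
Proof. by rewrite /tk -mulrBl -natrB// subSnn mul1r. Qed.

Local Notation UU N k := (U c v alpha i B N k).

Lemma meas_UU N k : measurable (UU N k).
Proof. exact: meas_U. Qed.

Lemma sum_over_k j N : i != j ->
  pr (Alo c v alpha i B `&` Sj j) <=
  \sum_(k < N.+1) pr (UU N k) * Lam c X j (tk c N k) + 2 * (hN c N / c j).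
Proof.
move=> ij.
have hc : 0 <= hN c N / c j by rewrite divr_ge0 ?ltW ?hN_gt0.
rewrite (Alo_part alpha c0 v0 i B N) -bigcup_mkord setI_bigcupl bigcup_mkord.
rewrite (@pr_bigsetU (fun k => UU N k `&` Sj j) N.+1); first last.
- by apply: trivIset_setIr; exact: U_triv.
- by move=> k; apply: measurableI; [exact: meas_UU|exact: meas_Sj].
apply: (@le_trans _ _ (\sum_(k < N.+1) (pr (UU N k) * (Lam c X j (tk c N k) + hN c N / c j)
   + pr (Vset c v i B alpha j (tk c N k) (tk c N k.+1)) * (hN c N / c j)))).
  apply: ler_sum => k _; rewrite -(tk_diff N k).
  by apply: core => //; [exact: tk_ge0|apply: tk_le].
rewrite big_split /=.
under eq_bigr do rewrite mulrDr.
rewrite big_split /= -addrA lerD2l -!mulr_suml.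
have s1 : \sum_(k < N.+1) pr (UU N k) <= 1.
  rewrite -(@pr_bigsetU (fun k => UU N k) N.+1); [|exact: meas_UU|exact: U_triv].
  by apply: pr_le1; apply: bigsetU_measurable => k _; exact: meas_UU.
have s2 : \sum_(k < N.+1) pr (Vset c v i B alpha j (tk c N k) (tk c N k.+1)) <= 1.
  rewrite -(@pr_bigsetU (fun k => Vset c v i B alpha j (tk c N k) (tk c N k.+1)) N.+1).
  - by apply: pr_le1; apply: bigsetU_measurable => k _; exact: meas_Vset.
  - by move=> k; exact: meas_Vset.
  - exact: V_triv.
nra.
Qed.


Local Notation AA := (Aset c v alpha i B).
Local Notation Alo' := (Alo c v alpha i B).
Local Notation Ahi' := (Ahi c v alpha i B).

Lemma meas_Alo : measurable Alo'.
Proof.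
apply: measurableI; first exact: meas_Aset.
by apply: mlt; [exact: meas_ts|exact: measurable_cst].
Qed.

Lemma meas_Ahi : measurable Ahi'.
Proof.
apply: measurableI; first exact: meas_Aset.
by apply: mle; [exact: measurable_cst|exact: meas_ts].
Qed.

Lemma A_split (E : set T) : measurable E ->
  pr (AA `&` E) = pr (Alo' `&` E) + pr (Ahi' `&` E).
Proof.
move=> mE; rewrite -prU.
- congr pr; apply/seteqP; split => w /=.
    move=> [Aw Ew]; case: (ltP (ts w) (Csum c)%:E) => h; [left|right]; by [].
  by move=> [[[Aw _] Ew]|[[Aw _] Ew]].
- exact: measurableI meas_Alo mE.
- exact: measurableI meas_Ahi mE.
- apply/seteqP; split => w //= [[[_ h1] _] [[_ h2] _]].
  by move: (lt_le_trans h1 h2); rewrite ltxx.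
Qed.

Lemma total_bound N :
  \sum_j c j * pr (AA `&` Sj j) <=
  c i * pr AA + Csum c * pr Ahi' + \sum_(k < N.+1) tk c N k * pr (UU N k)
  + 2 * n%:R * hN c N.
Proof.
have h0 := hN_gt0 c0 i N.
pose g j := c j * pr Ahi' + \sum_(k < N.+1) pr (UU N k) * (c j * Lam c X j (tk c N k))
  + 2 * hN c N.
have g0 j : 0 <= g j.
  rewrite /g; apply: addr_ge0; last by rewrite mulr_ge0// ltW.
  apply: addr_ge0; first by rewrite mulr_ge0 ?pr_ge0// ltW.
  apply: sumr_ge0 => k _; apply: mulr_ge0; first exact: pr_ge0.
  apply: mulr_ge0; first exact: ltW.
  by apply: (Lam_ge0 c0 feas); exact: tk_ge0.
have Hj j : j != i -> c j * pr (AA `&` Sj j) <= g j.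
  move=> ji; rewrite A_split; last exact: meas_Sj.
  have := sum_over_k N (_ : i != j); rewrite eq_sym => /(_ ji) hk.
  have h2 : pr (Ahi' `&` Sj j) <= pr Ahi'.
    by apply: pr_mono; [exact: measurableI meas_Ahi (meas_Sj j)|exact: meas_Ahi|move=> w []].
  have cj := c0 j.
  rewrite /g.
  have -> : \sum_(k < N.+1) pr (UU N k) * (c j * Lam c X j (tk c N k)) =
      c j * \sum_(k < N.+1) pr (UU N k) * Lam c X j (tk c N k).
    by rewrite mulr_sumr; apply: eq_bigr => k _; rewrite mulrCA.
  have -> : 2 * hN c N = c j * (2 * (hN c N / c j)).
    by field; rewrite gt_eqF.
  nra.
have Hi : c i * pr (AA `&` Sj i) <= c i * pr AA.
  rewrite ler_pM2l ?c0//; apply: pr_mono; first exact: measurableI meas_Aset (meas_Sj i).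
    exact: meas_Aset.
  by move=> w [].
rewrite (bigD1 i)//=.
have S1 : \sum_(j | j != i) c j * pr (AA `&` Sj j) <= \sum_j g j.
  rewrite [X in _ <= X](bigD1 i)//=.
  apply: (le_trans (ler_sum _ Hj)); rewrite lerDr; exact: g0.
have S2 : \sum_j g j = Csum c * pr Ahi' +
    \sum_(k < N.+1) pr (UU N k) * (\sum_j c j * Lam c X j (tk c N k)) + n%:R * (2 * hN c N).
  rewrite /g !big_split /= -mulr_suml; congr (_ + _ + _).
    rewrite exchange_big /=; apply: eq_bigr => k _; by rewrite mulr_sumr.
  by rewrite sumr_const card_ord [RHS]mulr_natl.
have S3 : \sum_(k < N.+1) pr (UU N k) * (\sum_j c j * Lam c X j (tk c N k)) <=
    \sum_(k < N.+1) tk c N k * pr (UU N k).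
  apply: ler_sum => k _; rewrite mulrC ler_wpM2r ?pr_ge0//.
  exact/sum_cLam/tk_ge0.
lra.
Qed.

End Core.


Section Final.
Variables (R : realType) (n : nat) (c v : 'I_n -> R) (X : 'I_n -> R -> R).
Variables (d : measure_display) (T : measurableType d) (P : probability T R).
Variables (alpha : 'I_n -> T -> \bar R).
Hypothesis c0 : forall i, 0 < c i.
Hypothesis v0 : forall i, 0 <= v i.
Hypothesis feas : feasible_GCP c X.
Hypothesis malpha : forall i, measurable_fun setT (alpha i).
Hypothesis indep : mutually_independent P alpha.
Hypothesis hsurv : forall i (s : R), 0 <= s ->
     P [set w | (s%:E < alpha i w)%E] = (expR (- cum_rate (X i) (c i) s))%:E.
Variables (i : 'I_n) (B : set (\bar R)).
Hypothesis mB : measurable B.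

Local Notation taus k := (tau_box c v alpha k).
Local Notation ts := (tau_star c v alpha).
Local Notation pr := (pr P).
Local Notation AA := (Aset c v alpha i B).
Local Notation Alo' := (Alo c v alpha i B).
Local Notation Ahi' := (Ahi c v alpha i B).
Local Notation UU N k := (U c v alpha i B N k).

Lemma ts_pos w : AA w -> (0 < ts w)%E.
Proof.
move=> [tk _]; rewrite (ts_taken tk).
by apply: lt_le_trans (taus_ge c v alpha i w); rewrite lte_fin (bet_gt0 c0 v0).
Qed.

Lemma int_ts_lb N :
  ((Csum c * pr Ahi' + \sum_(k < N.+1) tk c N k * pr (UU N k))%:E <=
   \int[P]_(w in AA) ts w)%E.
Proof.
have mA := meas_Aset c v malpha i mB.
have mlo := meas_Alo c v malpha i mB.
have mhi := meas_Ahi c v malpha i mB.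
have mts := meas_ts c v malpha.
have eA : AA = Ahi' `|` Alo'.
  apply/seteqP; split => w.
    move=> Aw; case: (ltP (ts w) (Csum c)%:E) => h; [right|left]; by [].
  by move=> [[]|[]].
rewrite eA ge0_integral_setU//; first last.
- rewrite disj_set2E; apply/eqP/seteqP; split => w //= [[_ h1] [_ h2]].
  by move: (lt_le_trans h2 h1); rewrite ltxx.
- by rewrite -eA => w Aw; apply/ltW/ts_pos.
- exact: measurable_funS mts.
rewrite EFinD leeD//.
  apply: (@le_trans _ _ (\int[P]_(w in Ahi') (Csum c)%:E)%E).
    have -> : (Csum c * pr Ahi')%:E = ((Csum c)%:E * P Ahi')%E by rewrite EFinM (prE P mhi).
    by rewrite integral_cst.
  apply: ge0_le_integral => //.
  - by move=> w _; rewrite lee_fin ltW// (Csum_gt0 c0 i).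
  - exact: measurable_funS mts.
  - by move=> w [].
rewrite (Alo_part alpha c0 v0 i B N). rewrite -(@big_mkord _ set0 setU N.+1 xpredT (fun k => UU N k)) ge0_integral_bigsetU//; first last.
- move=> w Dw; apply/ltW/ts_pos; move: Dw.
  by rewrite big_mkord -(Alo_part alpha c0 v0 i B N) => -[].
- exact: measurable_funS mts.
- by apply: sub_trivIset (U_triv c0 (i:=i) (B:=B) (N:=N)).
- exact: iota_uniq.
- by move=> k; exact: (meas_UU c v malpha i mB).
rewrite big_mkord -sumEFin; apply: lee_sum => k _.
apply: (@le_trans _ _ (\int[P]_(w in UU N k) (tk c N k)%:E)%E).
  have -> : (tk c N k * pr (UU N k))%:E = ((tk c N k)%:E * P (UU N k))%E.
    by rewrite EFinM (prE P (meas_UU c v malpha i mB N k)).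
  by rewrite integral_cst//; exact: (meas_UU c v malpha i mB).
apply: ge0_le_integral => //.
- exact: (meas_UU c v malpha i mB).
- by move=> w _; rewrite lee_fin tk_ge0.
- exact: measurable_funS mts.
- move=> w [[tkw Bw] [h _]]; rewrite (ts_taken tkw); exact: ltW.
Qed.


Lemma indic_nn (A : set T) w : 0 <= (\1_A w : R).
Proof. by rewrite indicE; case: (w \in A). Qed.

Lemma cost_eq w : opening_cost c v alpha w =
  (\sum_j ((c j) * \1_(Sj c v alpha j) w)%:E)%E.
Proof.
rewrite /opening_cost big_mkcond; apply: eq_bigr => j _; rewrite indicE.
have -> : (w \in Sj c v alpha j) = (alpha j w <= ts w)%E.
  by apply/idP/idP => [/set_mem|/mem_set].
by case: ifP => _; rewrite ?mulr1 ?mulr0.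
Qed.

Lemma meas_cost_j j : measurable_fun setT (fun w => ((c j) * \1_(Sj c v alpha j) w)%:E).
Proof.
apply/measurable_EFinP; apply: measurable_funM; first exact: measurable_cst.
exact/measurable_indic/(meas_Sj c v malpha).
Qed.

Lemma LHS_eq : (\int[P]_(w in AA) (opening_cost c v alpha w + (v i)%:E) =
  (\sum_j c j * pr (AA `&` Sj c v alpha j) + v i * pr AA)%:E)%E.
Proof.
have mA := meas_Aset c v malpha i mB.
rewrite ge0_integralD//; first last.
- by move=> w _; rewrite lee_fin v0.
- rewrite (_ : opening_cost c v alpha = fun w => (\sum_j ((c j) * \1_(Sj c v alpha j) w)%:E)%E).
    by apply: emeasurable_sum => j; apply: measurable_funS (meas_cost_j j).
  by apply/funext => w; rewrite cost_eq.
- move=> w _; rewrite cost_eq; apply: sume_ge0 => j _.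
  by rewrite lee_fin; apply: mulr_ge0; [exact: ltW|exact: indic_nn].
rewrite integral_cst// EFinD; congr (_ + _)%E; last first.
  by rewrite EFinM; congr (_ * _)%E; exact: (prE P mA).
under eq_integral do rewrite cost_eq.
rewrite ge0_integral_sum//; first last.
- by move=> j w _; rewrite lee_fin; apply: mulr_ge0; [exact: ltW|exact: indic_nn].
- by move=> j; apply: measurable_funS (meas_cost_j j).
rewrite -sumEFin; apply: eq_bigr => j _.
under eq_integral do rewrite EFinM.
rewrite ge0_integralZl//; first last.
- by rewrite lee_fin ltW.
- by apply/measurable_EFinP; apply: measurable_indic; exact: (meas_Sj c v malpha).
rewrite integral_indic//; last exact: (meas_Sj c v malpha).
rewrite setIC EFinM; congr (_ * _)%E.
exact: (prE P (measurableI _ _ mA (meas_Sj c v malpha j))).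
Qed.

Lemma RHS_eq : (\int[P]_(w in AA) (ts w + (c i + v i)%:E) =
  \int[P]_(w in AA) ts w + ((c i + v i) * pr AA)%:E)%E.
Proof.
have mA := meas_Aset c v malpha i mB.
rewrite ge0_integralD//; first last.
- by move=> w _; rewrite lee_fin addr_ge0 ?v0// ltW.
- exact: measurable_funS (meas_ts c v malpha).
- by move=> w Aw; apply/ltW/ts_pos.
rewrite integral_cst// EFinM; congr (_ + (_ * _))%E; exact: (prE P mA).
Qed.

Lemma main_N N : (\int[P]_(w in AA) (opening_cost c v alpha w + (v i)%:E) <=
  \int[P]_(w in AA) (ts w + (c i + v i)%:E) + (2 * n%:R * hN c N)%:E)%E.
Proof.
rewrite LHS_eq RHS_eq.
have tot := total_bound c0 v0 feas malpha indep hsurv i mB N.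
apply: (@le_trans _ _ (((Csum c * pr Ahi' + \sum_(k < N.+1) tk c N k * pr (UU N k))
   + (c i + v i) * pr AA + 2 * n%:R * hN c N)%:E)%E).
  rewrite lee_fin; lra.
rewrite !EFinD; apply: leeD => //; apply: leeD => //.
exact: int_ts_lb.
Qed.

End Final.

Unset Implicit Arguments. Set Strict Implicit.

Theorem lemma4p6 (R : realType) (n : nat) (c v : 'I_n -> R) (X : 'I_n -> R -> R)
  (d : measure_display) (T : measurableType d) (P : probability T R)
  (alpha : 'I_n -> T -> \bar R) :
  (forall i, 0 < c i) -> (forall i, 0 <= v i) ->
  feasible_GCP c X ->
  (forall i, measurable_fun setT (alpha i)) ->
  mutually_independent P alpha ->
  (forall i (s : R), 0 <= s ->
     P [set w | (s%:E < alpha i w)%E] = (expR (- cum_rate (X i) (c i) s))%:E) ->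
  (forall i, P [set w | (alpha i w < 0)%E] = 0%E) ->
  forall (i : 'I_n) (B : set (\bar R)), measurable (B : set (\bar R)) ->
    let A := [set w | taken c v alpha i w /\ B (tau_star c v alpha w)] in
    (\int[P]_(w in A) (opening_cost c v alpha w + (v i)%:E)
      <= \int[P]_(w in A) (tau_star c v alpha w + (c i + v i)%:E))%E.
Proof.
move=> c0 v0 feas malpha indep hsurv _ i B mB.
apply/lee_addgt0Pr => e e0.
pose N := Num.trunc (2 * n%:R * Csum c / e).
have Cg := Csum_gt0 c0 i.
have hNe : 2 * n%:R * hN c N <= e.
  have h := truncnS_gt (2 * n%:R * Csum c / e).
  rewrite -/N in h.
  have N0 : 0 < N.+1%:R :> R by rewrite ltr0n.
  rewrite /hN mulrA ler_pdivrMr//.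
  by rewrite -ler_pdivrMl// mulrC ltW.
apply: le_trans (main_N c0 v0 feas malpha indep hsurv i mB N) _.
by apply: leeD => //; rewrite lee_fin.
Qed.
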